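(* Let $X$, $Y$ be disjoint sets of cardinality at least two, $M\le\mathrm{Sym}(X)$ and $N\le\mathrm{Sym}(Y)$ nontrivial permutation groups, $T$ the $(|X|,|Y|)$-biregular tree and $c$ a legal colouring. Suppose $v_1,v_2\in V_X$ and $w_1,w_2\in V_Y$, with $\{v_1,w_1\}$ and $\{v_2,w_2\}$ edges of $T$. Then these two edges lie in the same orbit of $U_c(M,N)$ if and only if $v_1,v_2$ lie in the same orbit of $U_c(M,N)$ and $w_1,w_2$ lie in the same orbit of $U_c(M,N)$.
   Context: $T$ has natural bipartition $VT=V_X\sqcup V_Y$ (vertices in $V_X$ have valency $|X|$, in $V_Y$ valency $|Y|$). $A(v)$, $\overline{A}(v)$ are the sets of arcs with origin, resp. terminus, $v$. A legal colouring is a map $c:AT\to X\cup Y$ restricting to a bijection $A(v)\to X$ for $v\in V_X$, to a bijection $A(v)\to Y$ for $v\in V_Y$, and constant on each $\overline{A}(v)$. $U_c(M,N)$ is the group of $g\in\mathrm{Aut}(T)$ with $gV_X=V_X$ and $c|_{A(gv)}\circ g|_{A(v)}\circ(c|_{A(v)})^{-1}$ in $M$ for $v\in V_X$ and in $N$ for $v\in V_Y$. *)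

(* Defs.v *)
From Stdlib Require Import List.
Import ListNotations.
Set Implicit Arguments.

Fixpoint chain {V : Type} (adj : V -> V -> Prop) (v : V) (q : list V) : Prop :=
  match q with
  | nil => True
  | w :: q' => adj v w /\ chain adj w q'
  end.

(* a (simple) cycle of length >= 3 *)
Definition has_cycle {V : Type} (adj : V -> V -> Prop) : Prop :=
  exists (v : V) (q : list V),
    2 <= length q /\ NoDup (v :: q) /\ chain adj v q /\ adj (last q v) v.

Definition connected {V : Type} (adj : V -> V -> Prop) : Prop :=
  forall u w : V, exists q : list V, chain adj u q /\ last q u = w.

Definition is_tree {V : Type} (adj : V -> V -> Prop) : Prop :=
  (forall u w, adj u w -> adj w u) /\ (forall u, ~ adj u u) /\
  connected adj /\ ~ has_cycle adj.

(* VX is a bipartition class of the tree, V_Y being its complement: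
   every edge joins a vertex of V_X with a vertex of V_Y *)
Definition bipartition {V : Type} (adj : V -> V -> Prop) (VX : V -> Prop) : Prop :=
  forall u w, adj u w -> (VX u <-> ~ VX w).

Definition perm_group {X : Type} (M : (X -> X) -> Prop) : Prop :=
  M (fun x => x) /\
  (forall f g, M f -> M g -> M (fun x => f (g x))) /\
  (forall f, M f -> exists h, M h /\ (forall x, h (f x) = x) /\ (forall x, f (h x) = x)).

Definition nontrivial_group {X : Type} (M : (X -> X) -> Prop) : Prop :=
  exists f, M f /\ exists x, f x <> x.

(* Arcs are ordered pairs (v, w) with adj v w; a colouring assigns to each arc
   (v, w) the colour c v w in the disjoint union X + Y. *)
Definition legal_colouring {V X Y : Type} (adj : V -> V -> Prop) (VX : V -> Prop)
  (c : V -> V -> X + Y) : Prop :=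
  (forall v, VX v ->
     (forall w, adj v w -> exists x, c v w = inl x) /\
     (forall w w', adj v w -> adj v w' -> c v w = c v w' -> w = w') /\
     (forall x, exists w, adj v w /\ c v w = inl x)) /\
  (forall v, ~ VX v ->
     (forall w, adj v w -> exists y, c v w = inr y) /\
     (forall w w', adj v w -> adj v w' -> c v w = c v w' -> w = w') /\
     (forall y, exists w, adj v w /\ c v w = inr y)) /\
  (forall v u u', adj u v -> adj u' v -> c u v = c u' v).

Definition is_aut {V : Type} (adj : V -> V -> Prop) (g : V -> V) : Prop :=
  (exists h : V -> V, (forall v, h (g v) = v) /\ (forall v, g (h v) = v)) /\
  (forall u w, adj u w <-> adj (g u) (g w)).

Definition U_c {V X Y : Type} (adj : V -> V -> Prop) (VX : V -> Prop)
  (c : V -> V -> X + Y) (M : (X -> X) -> Prop) (N : (Y -> Y) -> Prop)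
  (g : V -> V) : Prop :=
  is_aut adj g /\
  (forall v, VX (g v) <-> VX v) /\
  (* local action c|A(gv) o g|A(v) o (c|A(v))^-1 lies in M, for v in V_X *)
  (forall v, VX v -> exists s, M s /\
      forall w x, adj v w -> c v w = inl x -> c (g v) (g w) = inl (s x)) /\
  (* ... and in N, for v in V_Y *)
  (forall v, ~ VX v -> exists s, N s /\
      forall w y, adj v w -> c v w = inr y -> c (g v) (g w) = inr (s y)).

(* Main.v *)
Require Import Defs.
From Stdlib Require Import List Lia Classical ClassicalEpsilon.
Import ListNotations.

Fixpoint Wk {V : Type} (adj : V -> V -> Prop) (l : list V) : Prop :=
  match l with a :: ((b :: _) as t) => adj a b /\ Wk adj t | _ => True end.
Fixpoint Rd {V : Type} (l : list V) : Prop :=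
  match l with a :: ((b :: d :: _) as t) => a <> d /\ Rd t | _ => True end.

Lemma Wk_tl {V} (adj : V -> V -> Prop) a l : Wk adj (a :: l) -> Wk adj l.
Proof. destruct l; simpl; tauto. Qed.
Lemma Rd_tl {V} a (l : list V) : Rd (a :: l) -> Rd l.
Proof. destruct l as [|b [|d l]]; simpl; tauto. Qed.

Lemma Wk_app {V} (adj : V -> V -> Prop) l1 x l2 :
  Wk adj (l1 ++ x :: l2) <-> Wk adj (l1 ++ [x]) /\ Wk adj (x :: l2).
Proof.
  induction l1 as [|a l1 IH]; simpl.
  - tauto.
  - destruct l1 as [|b l1]; simpl in *.
    + tauto.
    + rewrite IH. tauto.
Qed.

Lemma Rd_app {V} (l1 : list V) x y l2 :
  Rd (l1 ++ x :: y :: l2) <-> Rd (l1 ++ [x; y]) /\ Rd (x :: y :: l2).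
Proof.
  induction l1 as [|a l1 IH]; simpl.
  - tauto.
  - destruct l1 as [|b [|d l1]]; simpl in *.
    + tauto.
    + rewrite IH. tauto.
    + rewrite IH. tauto.
Qed.

Lemma Wk_prefix {V} (adj : V -> V -> Prop) l1 l2 : Wk adj (l1 ++ l2) -> Wk adj l1.
Proof.
  induction l1 as [|a l1 IH]; simpl; auto.
  destruct l1 as [|b l1]; simpl in *; auto. tauto.
Qed.
Lemma Rd_prefix {V} (l1 l2 : list V) : Rd (l1 ++ l2) -> Rd l1.
Proof.
  induction l1 as [|a l1 IH]; simpl; auto.
  destruct l1 as [|b [|d l1]]; simpl in *; auto. tauto.
Qed.

Lemma Wk_rev {V} (adj : V -> V -> Prop) (Hs : forall u w, adj u w -> adj w u) l :
  Wk adj l -> Wk adj (rev l).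
Proof.
  induction l as [|a l IH]; simpl; auto.
  destruct l as [|b l]; simpl; auto.
  intros [Hab Hl]. specialize (IH Hl). simpl in IH.
  rewrite <- app_assoc. simpl. apply Wk_app. split; auto. simpl; auto.
Qed.

Lemma Rd_rev {V} (l : list V) : Rd l -> Rd (rev l).
Proof.
  induction l as [|a l IH]; simpl; auto.
  destruct l as [|b [|d l]]; simpl; auto.
  intros [Had Hl]. specialize (IH Hl). simpl in IH.
  rewrite <- !app_assoc. simpl. apply Rd_app. split.
  - rewrite <- app_assoc in IH. exact IH.
  - simpl. split; auto.
Qed.

Lemma chain_Wk {V} (adj : V -> V -> Prop) v q : chain adj v q <-> Wk adj (v :: q).
Proof.
  revert v; induction q as [|w q IH]; intros v; simpl; [tauto|].
  rewrite IH. tauto.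
Qed.

Lemma last_cons_indep {V} (a : V) l x y : last (a :: l) x = last (a :: l) y.
Proof.
  revert a; induction l as [|b l IH]; intros a; simpl; auto.
  destruct l; auto. apply (IH b).
Qed.

Lemma last_In {V} (a : V) l x : In (last (a :: l) x) (a :: l).
Proof.
  revert a; induction l as [|b l IH]; intros a; simpl; auto.
  right. specialize (IH b). destruct l; simpl in *; auto.
Qed.

Lemma NoDup_two {V} (l m : list V) x : NoDup (l ++ m) -> In x l -> In x m -> False.
Proof.
  induction l as [|a l IH]; simpl; auto.
  intros Hn [<-|Hi] Hm; inversion Hn; subst; eauto.
  apply H1. apply in_or_app; auto.
Qed.

Lemma red_NoDup {V} (adj : V -> V -> Prop) (Ht : is_tree adj) l :
  Wk adj l -> Rd l -> NoDup l.
Proof.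
  destruct Ht as [Hs [Hirr [_ Hcyc]]].
  induction l as [|a t IH]; intros HW HR; [constructor|].
  assert (Hnt : NoDup t) by (apply IH; [eapply Wk_tl|eapply Rd_tl]; eauto).
  constructor; auto.
  intro Hin. apply in_split in Hin as [t1 [t2 Ht]]. subst t.
  assert (Hn1 : ~ In a t1) by (intro; apply (NoDup_remove_2 _ _ _ Hnt); apply in_or_app; auto).
  assert (HW1 : Wk adj (a :: t1 ++ [a])).
  { change (a :: t1 ++ a :: t2) with ((a :: t1) ++ a :: t2) in HW.
    apply Wk_app in HW. apply HW. }
  assert (HR1 : Rd (a :: t1 ++ [a])).
  { assert (E : a :: t1 ++ a :: t2 = (a :: t1 ++ [a]) ++ t2) by (simpl; rewrite <- app_assoc; reflexivity).
    rewrite E in HR. eapply Rd_prefix; eauto. }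
  destruct t1 as [|b [|d t1]].
  - simpl in HW1. apply (Hirr a). tauto.
  - simpl in HR1. tauto.
  - apply Hcyc. exists a, (b :: d :: t1). split; [|split; [|split]].
    + simpl; lia.
    + constructor; auto. eapply NoDup_app_remove_r; eauto.
    + apply chain_Wk. eapply Wk_prefix. change (a :: (b :: d :: t1) ++ [a]) with ((a :: b :: d :: t1) ++ [a]) in HW1. eauto.
    + destruct (exists_last (l := b :: d :: t1)) as [t' [z Hz]]; [discriminate|].
      rewrite Hz in *. rewrite last_last.
      rewrite <- app_assoc in HW1. change (a :: t' ++ [z] ++ [a]) with ((a :: t') ++ z :: [a]) in HW1.
      apply Wk_app in HW1. simpl in HW1. tauto.
Qed.

Definition RP {V} (adj : V -> V -> Prop) (v0 u : V) (t : list V) : Prop :=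
  Wk adj (u :: t) /\ Rd (u :: t) /\ last (u :: t) u = v0.

Lemma rp_exists_aux {V} (adj : V -> V -> Prop) v0 l : forall u,
  Wk adj (u :: l) -> last (u :: l) u = v0 -> exists t, RP adj v0 u t.
Proof.
  induction l as [|a l IH]; intros u HW Hl.
  - exists []. simpl in Hl; subst. repeat split; simpl; auto.
  - destruct HW as [Hua HW].
    destruct (IH a HW) as [t [HW' [HR' HL']]].
    { rewrite <- Hl. change (last (a :: l) a = last (a :: l) u). apply last_cons_indep. }
    destruct t as [|b t].
    + exists [a]. simpl in HL'. subst. repeat split; simpl; auto.
    + destruct (classic (b = u)) as [E|E].
      * subst b. exists t. split; [|split].
        -- simpl in HW'. destruct t; simpl in *; tauto.
        -- eapply Rd_tl; eauto.
        -- rewrite <- HL'. change (last (u :: t) u = last (u :: t) a). apply last_cons_indep.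
      * exists (a :: b :: t). split; [|split].
        -- simpl. simpl in HW'. tauto.
        -- simpl. simpl in HR'. split; auto.
        -- rewrite <- HL'. change (last (a :: b :: t) u = last (a :: b :: t) a). apply last_cons_indep.
Qed.

Lemma rp_exists {V} (adj : V -> V -> Prop) (Ht : is_tree adj) v0 u : exists t, RP adj v0 u t.
Proof.
  destruct Ht as [_ [_ [Hc _]]].
  destruct (Hc u v0) as [q [Hq Hl]].
  apply (rp_exists_aux adj v0 q u).
  - apply chain_Wk; auto.
  - rewrite <- Hl. destruct q; simpl; auto.
Qed.

Lemma rp_unique {V} (adj : V -> V -> Prop) (Ht : is_tree adj) v0 t1 : forall u t2,
  RP adj v0 u t1 -> RP adj v0 u t2 -> t1 = t2.
Proof.
  assert (Hs := proj1 Ht).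
  assert (Hcontra : forall u a t, RP adj v0 u (a :: t) -> u = v0 -> False).
  { intros u a t [HW [HR HL]] E.
    pose proof (red_NoDup adj Ht _ HW HR) as Hn. apply NoDup_cons_iff in Hn as [Hni _].
    apply Hni. simpl in HL. rewrite E, <- HL.
    change (In (last (a :: t) u) (a :: t)). apply last_In. }
  induction t1 as [|a1 t1 IH]; intros u t2 H1 H2.
  - destruct t2 as [|a2 t2]; auto.
    destruct H1 as [_ [_ HL]]. simpl in HL. exfalso; eauto.
  - destruct t2 as [|a2 t2].
    + destruct H2 as [_ [_ HL]]. simpl in HL. exfalso; eauto.
    + destruct (classic (a1 = a2)) as [E|E].
      * subst a2. f_equal. apply (IH a1).
        -- destruct H1 as [HW [HR HL]]. split; [|split].
           ++ eapply Wk_tl; eauto.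
           ++ eapply Rd_tl; eauto.
           ++ rewrite <- HL. simpl. apply last_cons_indep.
        -- destruct H2 as [HW [HR HL]]. split; [|split].
           ++ eapply Wk_tl; eauto.
           ++ eapply Rd_tl; eauto.
           ++ rewrite <- HL. simpl. apply last_cons_indep.
      * exfalso.
        destruct H1 as [HW1 [HR1 HL1]]. destruct H2 as [HW2 [HR2 HL2]].
        set (L := (rev t2 ++ [a2]) ++ u :: a1 :: t1).
        assert (HW : Wk adj L).
        { unfold L. apply Wk_app. split.
          - change (Wk adj (rev (u :: a2 :: t2))). apply Wk_rev; auto.
          - exact HW1. }
        assert (HR : Rd L).
        { unfold L. rewrite <- app_assoc. simpl. apply Rd_app. split.
          - replace (rev t2 ++ [a2; u]) with (rev (u :: a2 :: t2)) by (simpl; rewrite <- app_assoc; reflexivity).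
            apply Rd_rev; auto.
          - simpl. simpl in HR1. split; auto. }
        pose proof (red_NoDup adj Ht _ HW HR) as Hn.
        apply (NoDup_two _ _ v0 Hn).
        -- change (In v0 (rev (a2 :: t2))). apply -> in_rev. rewrite <- HL2.
           change (In (last (a2 :: t2) u) (a2 :: t2)). apply last_In.
        -- right. rewrite <- HL1. change (In (last (a1 :: t1) u) (a1 :: t1)). apply last_In.
Qed.

Inductive Tr {V X Y : Type} (adj : V -> V -> Prop) (c : V -> V -> X + Y)
  (sg : X + Y -> X + Y) (v0 : V) : list V -> list V -> Prop :=
| Tr0 : Tr adj c sg v0 [v0] [v0]
| TrS : forall u l u' r w w', Tr adj c sg v0 (u :: l) (u' :: r) ->
    adj u w -> adj u' w' -> c u' w' = sg (c u w) ->
    Tr adj c sg v0 (w :: u :: l) (w' :: u' :: r).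

Lemma c_inj {V X Y} (adj : V -> V -> Prop) VX (c : V -> V -> X + Y)
  (Hc : legal_colouring adj VX c) u w w' :
  adj u w -> adj u w' -> c u w = c u w' -> w = w'.
Proof.
  destruct Hc as [H1 [H2 _]]. intros.
  destruct (classic (VX u)) as [h|h].
  - destruct (H1 u h) as [_ [Hi _]]; eauto.
  - destruct (H2 u h) as [_ [Hi _]]; eauto.
Qed.

Lemma Tr_det {V X Y} adj VX (c : V -> V -> X + Y) (Hc : legal_colouring adj VX c) sg v0 l r1 :
  Tr adj c sg v0 l r1 -> forall r2, Tr adj c sg v0 l r2 -> r1 = r2.
Proof.
  induction 1 as [|u l u' r w w' HT IH Ha Ha' Hcol]; intros r2 H2.
  - inversion H2; auto.
  - inversion H2 as [|u0 l0 u0' r0 w0 w0' HT0 Ha0 Ha0' Hcol0]; subst.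
    specialize (IH _ HT0). inversion IH; subst.
    f_equal. eapply (c_inj adj VX c Hc u0'); eauto. congruence.
Qed.

Lemma Tr_VX {V X Y} (adj : V -> V -> Prop) VX (c : V -> V -> X + Y)
  (Hbip : bipartition adj VX) sg v0 l r :
  Tr adj c sg v0 l r -> (VX (hd v0 l) <-> VX (hd v0 r)).
Proof.
  induction 1 as [|u l u' r w w' HT IH Ha Ha' Hcol]; simpl in *; [tauto|].
  pose proof (Hbip _ _ Ha). pose proof (Hbip _ _ Ha').
  split; intro h; apply NNPP; intro h'; tauto.
Qed.

Definition class_pres {X Y} (sg : X + Y -> X + Y) : Prop :=
  (forall x, exists x', sg (inl x) = inl x') /\ (forall y, exists y', sg (inr y) = inr y').

Lemma Tr_step {V X Y} (adj : V -> V -> Prop) VX (c : V -> V -> X + Y)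
  (Hc : legal_colouring adj VX c) (Hbip : bipartition adj VX) sg (Hsg : class_pres sg) v0
  u l u' r w : Tr adj c sg v0 (u :: l) (u' :: r) -> adj u w ->
  exists w', adj u' w' /\ c u' w' = sg (c u w).
Proof.
  intros HT Ha. pose proof (Tr_VX adj VX c Hbip _ _ _ _ HT) as HV. simpl in HV.
  destruct Hc as [H1 [H2 _]]. destruct Hsg as [S1 S2].
  destruct (classic (VX u)) as [h|h].
  - destruct (H1 u h) as [Hcol _]. destruct (Hcol w Ha) as [x Hx].
    destruct (S1 x) as [x' Hx']. destruct (H1 u' (proj1 HV h)) as [_ [_ Hs]].
    destruct (Hs x') as [w' [Hw1 Hw2]]. exists w'. rewrite Hx, Hx'. auto.
  - destruct (H2 u h) as [Hcol _]. destruct (Hcol w Ha) as [x Hx].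
    destruct (S2 x) as [x' Hx']. destruct (H2 u' (fun h' => h (proj2 HV h'))) as [_ [_ Hs]].
    destruct (Hs x') as [w' [Hw1 Hw2]]. exists w'. rewrite Hx, Hx'. auto.
Qed.

Lemma Tr_ex {V X Y} (adj : V -> V -> Prop) VX (c : V -> V -> X + Y)
  (Hs : forall u w, adj u w -> adj w u)
  (Hc : legal_colouring adj VX c) (Hbip : bipartition adj VX) sg (Hsg : class_pres sg) v0 l :
  forall u, Wk adj (u :: l) -> last (u :: l) u = v0 -> exists u' r, Tr adj c sg v0 (u :: l) (u' :: r).
Proof.
  induction l as [|a l IH]; intros u HW Hl.
  - simpl in Hl. subst. exists v0, []. constructor.
  - destruct HW as [Hua HW].
    destruct (IH a HW) as [a' [r HT]].
    { rewrite <- Hl. change (last (a :: l) a = last (a :: l) u). apply last_cons_indep. }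
    destruct (Tr_step adj VX c Hc Hbip sg Hsg v0 a l a' r u HT) as [u' [H1 H2]].
    { auto. }
    exists u', (a' :: r). constructor; auto.
Qed.

Lemma Tr_inv {V X Y} (adj : V -> V -> Prop) (c : V -> V -> X + Y) sg sg'
  (Hinv : forall z, sg' (sg z) = z) v0 l r :
  Tr adj c sg v0 l r -> Tr adj c sg' v0 r l.
Proof.
  induction 1 as [|u l u' r w w' HT IH Ha Ha' Hcol]; constructor; auto.
  rewrite Hcol, Hinv. reflexivity.
Qed.

Lemma Tr_W {V X Y} (adj : V -> V -> Prop) (Hs : forall u w, adj u w -> adj w u) (c : V -> V -> X + Y) sg v0 l r :
  Tr adj c sg v0 l r -> Wk adj r.
Proof.
  induction 1; [simpl; auto|]. change (adj w' u' /\ Wk adj (u' :: r)). auto.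
Qed.

Lemma Tr_last {V X Y} (adj : V -> V -> Prop) (c : V -> V -> X + Y) sg v0 l r :
  Tr adj c sg v0 l r -> last r v0 = v0.
Proof.
  induction 1; simpl; auto.
Qed.

Lemma Tr_RA {V X Y} (adj : V -> V -> Prop) VX (c : V -> V -> X + Y)
  (Hs : forall u w, adj u w -> adj w u)
  (Hc : legal_colouring adj VX c) (Hbip : bipartition adj VX) sg
  (Hfix : forall y, sg (inr y) = inr y) v0 (Hv0 : VX v0) u t l u' t' r :
  Tr adj c sg v0 (u :: t :: l) (u' :: t' :: r) -> c u' t' = sg (c u t).
Proof.
  intros HT. inversion HT as [|a l0 a' r0 w w' HT0 Ha Ha' Hcol]; subst.
  destruct Hc as [H1 [H2 H3]].
  destruct l as [|p l].
  - inversion HT0 as [|b l1 b' r1 z z' HT1]; subst.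
    rewrite (H3 _ _ _ (Hs _ _ Ha') (Hs _ _ Ha)).
    assert (hu : ~ VX u) by (apply (Hbip _ _ Ha); auto).
    destruct (H2 u hu) as [Hcl _]. destruct (Hcl _ (Hs _ _ Ha)) as [y Hy].
    rewrite Hy, Hfix. reflexivity.
  - inversion HT0 as [|b l1 b' r1 z z' HT1 Hb Hb' Hcol1]; subst.
    rewrite (H3 _ _ _ (Hs _ _ Ha') Hb'), (H3 _ _ _ (Hs _ _ Ha) Hb). exact Hcol1.
Qed.

Lemma Tr_Rd {V X Y} (adj : V -> V -> Prop) VX (c : V -> V -> X + Y)
  (Hs : forall u w, adj u w -> adj w u)
  (Hc : legal_colouring adj VX c) (Hbip : bipartition adj VX) sg
  (Hinj : forall z z', sg z = sg z' -> z = z')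
  (Hfix : forall y, sg (inr y) = inr y) v0 (Hv0 : VX v0) l r :
  Tr adj c sg v0 l r -> Rd l -> Rd r.
Proof.
  induction 1 as [|u l u' r w w' HT IH Ha Ha' Hcol]; simpl; auto.
  intros HR. assert (HR' : Rd (u :: l)) by (eapply Rd_tl; eauto).
  specialize (IH HR').
  destruct r as [|t' r]; auto.
  destruct l as [|t l].
  { inversion HT. }
  split; auto.
  intro E. subst t'.
  pose proof (Tr_RA adj VX c Hs Hc Hbip sg Hfix v0 Hv0 _ _ _ _ _ _ HT) as HRA.
  inversion HT as [|a l0 a' r0 z z' HT0 Hz Hz' Hcolz]; subst.
  destruct HR as [Hne _]. apply Hne.
  apply (c_inj adj VX c Hc u); auto.
  apply Hinj. congruence.
Qed.

Definition Grel {V X Y} (adj : V -> V -> Prop) (c : V -> V -> X + Y) sg v0 u u' : Prop :=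
  exists t r, RP adj v0 u t /\ Tr adj c sg v0 (u :: t) (u' :: r).

Lemma G_total {V X Y} (adj : V -> V -> Prop) VX (c : V -> V -> X + Y) (Ht : is_tree adj)
  (Hc : legal_colouring adj VX c) (Hbip : bipartition adj VX) sg (Hsg : class_pres sg) v0 u :
  exists u', Grel adj c sg v0 u u'.
Proof.
  destruct (rp_exists adj Ht v0 u) as [t Hrp].
  destruct Hrp as [HW [HR HL]] eqn:E.
  destruct (Tr_ex adj VX c (proj1 Ht) Hc Hbip sg Hsg v0 t u HW HL) as [u' [r HT]].
  exists u', t, r. split; auto.
Qed.

Lemma G_func {V X Y} (adj : V -> V -> Prop) VX (c : V -> V -> X + Y) (Ht : is_tree adj)
  (Hc : legal_colouring adj VX c) sg v0 u a b :
  Grel adj c sg v0 u a -> Grel adj c sg v0 u b -> a = b.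
Proof.
  intros [t1 [r1 [H1 T1]]] [t2 [r2 [H2 T2]]].
  pose proof (rp_unique adj Ht v0 t1 u t2 H1 H2). subst.
  pose proof (Tr_det adj VX c Hc sg v0 _ _ T1 _ T2) as E. inversion E; auto.
Qed.

Lemma G_inv {V X Y} (adj : V -> V -> Prop) VX (c : V -> V -> X + Y) (Ht : is_tree adj)
  (Hc : legal_colouring adj VX c) (Hbip : bipartition adj VX) sg sg'
  (Hinv : forall z, sg' (sg z) = z)
  (Hfix : forall y, sg (inr y) = inr y) v0 (Hv0 : VX v0) u u' :
  Grel adj c sg v0 u u' -> Grel adj c sg' v0 u' u.
Proof.
  intros [t [r [[HW [HR HL]] HT]]].
  exists r, t. split; [|eapply Tr_inv; eauto].
  split; [|split].
  - eapply Tr_W; eauto. apply Ht.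
  - eapply (Tr_Rd adj VX c (proj1 Ht) Hc Hbip sg); eauto.
    intros z z' E. rewrite <- (Hinv z), <- (Hinv z'), E. reflexivity.
  - rewrite (last_cons_indep u' r u' v0). eapply Tr_last; eauto.
Qed.

Lemma G_adj {V X Y} (adj : V -> V -> Prop) VX (c : V -> V -> X + Y) (Ht : is_tree adj)
  (Hc : legal_colouring adj VX c) (Hbip : bipartition adj VX) sg (Hsg : class_pres sg)
  (Hfix : forall y, sg (inr y) = inr y) v0 (Hv0 : VX v0) u w a b :
  adj u w -> Grel adj c sg v0 u a -> Grel adj c sg v0 w b ->
  adj a b /\ c a b = sg (c u w).
Proof.
  assert (Hs := proj1 Ht).
  intros Huw [t [r [[HW [HR HL]] HT]]] Hb.
  destruct (classic (exists t'', t = w :: t'')) as [[t'' E]|NE].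
  - subst t. pose proof HT as HT'.
    inversion HT' as [|p l0 w' r' z z' HT0 Hp Hp' Hcol]; subst r.
    assert (Gw : Grel adj c sg v0 w w').
    { exists t'', r'. split; auto. split; [|split].
      - eapply Wk_tl; eauto.
      - eapply Rd_tl; eauto.
      - rewrite <- HL. simpl. apply last_cons_indep. }
    pose proof (G_func adj VX c Ht Hc sg v0 w _ _ Gw Hb). subst b.
    split; auto. eapply Tr_RA; eauto.
  - destruct (Tr_step adj VX c Hc Hbip sg Hsg v0 u t a r w HT Huw) as [w' [H1 H2]].
    assert (Gw : Grel adj c sg v0 w w').
    { exists (u :: t), (a :: r). split; [|constructor; auto].
      split; [|split].
      - change (adj w u /\ Wk adj (u :: t)). auto.
      - destruct t as [|d t]; [simpl; auto|].
        change (w <> d /\ Rd (u :: d :: t)). split; auto.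
        intro E. subst d. apply NE. eauto.
      - rewrite <- HL. change (last (u :: t) w = last (u :: t) u). apply last_cons_indep. }
    pose proof (G_func adj VX c Ht Hc sg v0 w _ _ Gw Hb). subst b. auto.
Qed.

Lemma G_VX {V X Y} (adj : V -> V -> Prop) VX (c : V -> V -> X + Y)
  (Hbip : bipartition adj VX) sg v0 u a :
  Grel adj c sg v0 u a -> (VX a <-> VX u).
Proof.
  intros [t [r [_ HT]]]. pose proof (Tr_VX adj VX c Hbip _ _ _ _ HT). simpl in *. tauto.
Qed.

Lemma build {V X Y} (adj : V -> V -> Prop) VX (c : V -> V -> X + Y) (Ht : is_tree adj)
  (Hc : legal_colouring adj VX c) (Hbip : bipartition adj VX) sg sg'
  (Hsg : class_pres sg) (Hsg' : class_pres sg')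
  (Hfix : forall y, sg (inr y) = inr y) (Hfix' : forall y, sg' (inr y) = inr y)
  (Hinv : forall z, sg' (sg z) = z) (Hinv' : forall z, sg (sg' z) = z)
  v0 (Hv0 : VX v0) :
  exists g : V -> V, g v0 = v0 /\ (forall u, VX (g u) <-> VX u) /\ is_aut adj g /\
    (forall u w, adj u w -> c (g u) (g w) = sg (c u w)).
Proof.
  set (g := fun u => proj1_sig (constructive_indefinite_description _
              (G_total adj VX c Ht Hc Hbip sg Hsg v0 u))).
  set (g' := fun u => proj1_sig (constructive_indefinite_description _
              (G_total adj VX c Ht Hc Hbip sg' Hsg' v0 u))).
  assert (Hg : forall u, Grel adj c sg v0 u (g u)).
  { intro u. unfold g. destruct (constructive_indefinite_description _ _); auto. }
  assert (Hg' : forall u, Grel adj c sg' v0 u (g' u)).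
  { intro u. unfold g'. destruct (constructive_indefinite_description _ _); auto. }
  assert (K1 : forall u, g' (g u) = u).
  { intro u. eapply (G_func adj VX c Ht Hc sg' v0 (g u)); [apply Hg'|].
    eapply G_inv; eauto. }
  assert (K2 : forall u, g (g' u) = u).
  { intro u. eapply (G_func adj VX c Ht Hc sg v0 (g' u)); [apply Hg|].
    eapply G_inv; eauto. }
  assert (A : forall u w, adj u w -> adj (g u) (g w) /\ c (g u) (g w) = sg (c u w)).
  { intros u w H. eapply G_adj; eauto. }
  assert (A' : forall u w, adj u w -> adj (g' u) (g' w)).
  { intros u w H. eapply G_adj; eauto. }
  exists g. split; [|split; [|split]].
  - eapply (G_func adj VX c Ht Hc sg v0 v0); [apply Hg|].
    exists [], []. split; [|constructor]. split; [|split]; simpl; auto.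
  - intro u. eapply G_VX; eauto.
  - split.
    + exists g'. auto.
    + intros u w. split; [apply A|].
      intro H. rewrite <- (K1 u), <- (K1 w). auto.
  - apply A.
Qed.

Lemma U_comp {V X Y} (adj : V -> V -> Prop) VX (c : V -> V -> X + Y) M N
  (HM : perm_group M) (HN : perm_group N) g h :
  U_c adj VX c M N g -> U_c adj VX c M N h -> U_c adj VX c M N (fun v => h (g v)).
Proof.
  intros [[[gi [g1 g2]] ga] [gV [gX gY]]] [[[hi [h1 h2]] ha] [hV [hX hY]]].
  split; [|split; [|split]].
  - split.
    + exists (fun v => gi (hi v)). split; intro v; congruence.
    + intros u w. rewrite ga, ha. tauto.
  - intro v. rewrite hV, gV. tauto.
  - intros v Hv. destruct (gX v Hv) as [s [Ms Hs]].
    destruct (hX (g v) (proj2 (gV v) Hv)) as [s' [Ms' Hs']].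
    exists (fun x => s' (s x)). split; [apply HM; auto|].
    intros w x Hw Hx. apply Hs'; [apply (proj1 (ga v w)); auto|]. apply Hs; auto.
  - intros v Hv. destruct (gY v Hv) as [s [Ms Hs]].
    destruct (hY (g v) (fun h' => Hv (proj1 (gV v) h'))) as [s' [Ms' Hs']].
    exists (fun x => s' (s x)). split; [apply HN; auto|].
    intros w x Hw Hx. apply Hs'; [apply (proj1 (ga v w)); auto|]. apply Hs; auto.
Qed.

Theorem lemma3p10 (X Y V : Type)
  (HX : exists x1 x2 : X, x1 <> x2) (HY : exists y1 y2 : Y, y1 <> y2)
  (M : (X -> X) -> Prop) (N : (Y -> Y) -> Prop)
  (HM : perm_group M) (HN : perm_group N)
  (HMnt : nontrivial_group M) (HNnt : nontrivial_group N)
  (adj : V -> V -> Prop) (VX : V -> Prop)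
  (Htree : is_tree adj) (Hbip : bipartition adj VX)
  (c : V -> V -> X + Y) (Hc : legal_colouring adj VX c)
  (v1 v2 w1 w2 : V)
  (Hv1 : VX v1) (Hv2 : VX v2) (Hw1 : ~ VX w1) (Hw2 : ~ VX w2)
  (He1 : adj v1 w1) (He2 : adj v2 w2) :
  (exists g, U_c adj VX c M N g /\
     ((g v1 = v2 /\ g w1 = w2) \/ (g v1 = w2 /\ g w1 = v2)))
  <->
  ((exists g, U_c adj VX c M N g /\ g v1 = v2) /\
   (exists g, U_c adj VX c M N g /\ g w1 = w2)).
Proof.
  split.
  - intros [g [Ug [[E1 E2]|[E1 E2]]]].
    + split; exists g; auto.
    + exfalso. destruct Ug as [_ [HV _]]. apply Hw2. rewrite <- E1. apply HV. auto.
  - intros [[g1 [U1 E1]] [g2 [U2 E2]]].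
    pose proof U1 as U1'. pose proof U2 as U2'.
    destruct U1' as [[_ Ha1] [_ [L1 _]]]. destruct U2' as [[_ Ha2] [_ [L2 _]]].
    pose proof Hc as Hc'. destruct Hc' as [HcX [HcY Hterm]].
    destruct (proj1 (HcX v1 Hv1) w1 He1) as [x Hx].
    destruct (L1 v1 Hv1) as [s1 [Ms1 Hs1]]. specialize (Hs1 w1 x He1 Hx).
    destruct (L2 v1 Hv1) as [s2 [Ms2 Hs2]]. specialize (Hs2 w1 x He1 Hx).
    pose proof HM as HM'. destruct HM' as [Mid [Mcomp Minv]].
    destruct (Minv s1 Ms1) as [s1i [Ms1i [I1 J1]]].
    destruct (Minv s2 Ms2) as [s2i [Ms2i [I2 J2]]].
    set (s := fun z => s2 (s1i z)). set (si := fun z => s1 (s2i z)).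
    set (sg := fun z : X + Y => match z with inl a => inl (s a) | inr b => inr b end).
    set (sg' := fun z : X + Y => match z with inl a => inl (si a) | inr b => inr b end).
    destruct (build adj VX c Htree Hc Hbip sg sg') with (v0 := v2)
      as [h [Hh0 [HhV [Hha Hhc]]]]; auto.
    + split; intros; eexists; reflexivity.
    + split; intros; eexists; reflexivity.
    + intros [a|b]; unfold sg, sg', s, si; simpl; auto. rewrite I2, J1; auto.
    + intros [a|b]; unfold sg, sg', s, si; simpl; auto. rewrite I1, J2; auto.
    + assert (Uh : U_c adj VX c M N h).
      { split; [auto|split; [auto|split]].
        - intros v Hv. exists s. split.
          { unfold s. apply (Mcomp s2 s1i); auto. }
          intros w a Hw Ha. rewrite Hhc, Ha; auto.
        - intros v Hv. exists (fun y => y). split.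
          { apply HN. }
          intros w b Hw Hb. rewrite Hhc, Hb; auto. }
      exists (fun v => h (g1 v)). split; [apply U_comp; auto|].
      left. split; [rewrite E1; auto|].
      assert (Hw' : adj v2 (g1 w1)) by (rewrite <- E1; apply (proj1 (Ha1 v1 w1)); auto).
      rewrite E1 in Hs1.
      apply (c_inj adj VX c Hc v2).
      * rewrite <- Hh0 at 1. apply (proj1 (proj2 Hha v2 (g1 w1))). auto.
      * auto.
      * rewrite <- Hh0 at 1. rewrite Hhc by auto. rewrite Hs1.
        rewrite (Hterm w2 v2 (g2 v1) He2) by (rewrite <- E2; apply (proj1 (Ha2 v1 w1)); auto).
        rewrite E2 in Hs2. rewrite Hs2. unfold sg, s. simpl. rewrite I1. reflexivity.
Qed.
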